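(* Let $H$ be a $4$-tournament on $7$ vertices and let $C=v_1b_1v_2\dots v_7b_7v_1$ be a Hamiltonian cycle of $H$. Then any two different pairs of vertices, each consisting of two vertices that are not consecutive on $C$, are simultaneously contained in at most four of the hyperarcs $b_1,\dots,b_7$.
   Context: For $2\le k\le n$, a $k$-tournament $H$ on $n$ vertices is a pair $(V,A)$ where $V$ is a set of $n$ vertices and $A$ is a set of $k$-tuples of distinct vertices (hyperarcs) such that for every $k$-subset $S\subseteq V$, $A$ contains exactly one of the $k!$ orderings of $S$. For a hyperarc $a=(x_1\dots x_k)$, $x_i$ precedes $x_j$ if $i<j$. A Hamiltonian cycle is an alternating sequence $v_1b_1v_2\dots v_nb_nv_1$ of all $n$ distinct vertices and $n$ distinct hyperarcs such that $v_i$ precedes $v_{i+1}$ in $b_i$ (indices mod $n$). Two vertices are consecutive on $C$ if they are $v_i,v_{i+1}$ for some $i$ (mod $7$). A pair is contained in a hyperarc if both its vertices belong to the vertex set of the hyperarc. *)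

(* Defs.v *)
From mathcomp Require Import all_boot.
Set Implicit Arguments. Unset Strict Implicit. Unset Printing Implicit Defensive.

Definition is_tournament (k : nat) (V : finType) (A : {set k.-tuple V}) : Prop :=
  (forall a, a \in A -> uniq a) /\
  (forall S : {set V}, #|S| = k ->
     #|[set a in A | [set x in a] == S]| = 1).

Definition precedes (k : nat) (V : eqType) (x y : V) (a : k.-tuple V) : bool :=
  [&& x \in a, y \in a & index x a < index y a].

(* Hamiltonian cycle v_1 b_1 v_2 ... v_n b_n v_1 of the k-tournament A on V
   with #|V| = n, indexed by 'I_n (successor ordS is taken mod n):
   all n vertices distinct, all n hyperarcs distinct and in A, and
   v i precedes v (i+1 mod n) in b i. *)
Definition hamiltonian_cycle (k n : nat) (V : finType) (A : {set k.-tuple V})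
    (v : 'I_n -> V) (b : 'I_n -> k.-tuple V) : Prop :=
  injective v /\ injective b /\ (forall i, b i \in A) /\
  (forall i, precedes (v i) (v (ordS i)) (b i)).

Definition consecutive_pair (n : nat) (V : finType) (v : 'I_n -> V) (P : {set V}) : Prop :=
  exists i : 'I_n, P = [set v i; v (ordS i)].

Definition arc_set (k : nat) (V : finType) (a : k.-tuple V) : {set V} := [set x in a].

(* Main.v *)
Require Import Defs.
From mathcomp Require Import all_boot zify.

Theorem lemma3 (V : finType) (A : {set 4.-tuple V})
    (v : 'I_7 -> V) (b : 'I_7 -> 4.-tuple V) (P Q : {set V}) :
  #|V| = 7 ->
  is_tournament A ->
  hamiltonian_cycle A v b ->
  #|P| = 2 -> #|Q| = 2 -> P != Q ->
  ~ consecutive_pair v P -> ~ consecutive_pair v Q ->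
  #|[set i : 'I_7 | (P :|: Q) \subset arc_set (b i)]| <= 4.
Proof.
move=> cV [Auniq Atour] [_ [binj [bA _]]] cP cQ PQ _ _.
set U := P :|: Q.
set I := [set i : 'I_7 | U \subset arc_set (b i)].
have cS : forall i, #|arc_set (b i)| = 4.
  move=> i; rewrite /arc_set cardsE.
  by move/card_uniqP: (Auniq _ (bA i)); rewrite size_tuple.
have Sinj : forall i j, arc_set (b i) = arc_set (b j) -> i = j.
  move=> i j Eij; apply: binj.
  have [a Ea] := cards1P (introT eqP (Atour _ (cS j))).
  have Hi : b i \in [set a in A | [set x in a] == arc_set (b j)].
    by rewrite inE bA /=; apply/eqP; rewrite -Eij.
  have Hj : b j \in [set a in A | [set x in a] == arc_set (b j)].
    by rewrite inE bA /=.
  by rewrite Ea !inE in Hi Hj; rewrite (eqP Hi) (eqP Hj).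
have U3 : 3 <= #|U|.
  have := cardsUI P Q; rewrite cP cQ.
  have : #|P :&: Q| < 2.
    rewrite -cP; apply: proper_card; rewrite properEneq subsetIl andbT.
    apply/negP => /eqP E; move: PQ; rewrite eqEcard cP cQ leqnn andbT.
    by rewrite -E subsetIr.
  rewrite /U; lia.
case: (set_0Vmem I) => [->|[i0 i0I]]; first by rewrite cards0.
have U4 : #|U| <= 4.
  by rewrite -(cS i0); apply: subset_leq_card; move: i0I; rewrite inE.
have [U4e|U3e] : #|U| = 4 \/ #|U| = 3 by lia.
  have E : forall i, i \in I -> arc_set (b i) = U.
    move=> i; rewrite inE => sub; apply/eqP; rewrite eq_sym eqEcard sub cS U4e //.
  apply: (@leq_trans 1); last by [].
  rewrite -[X in _ <= X](cards1 i0); apply: subset_leq_card; apply/subsetP => j jI.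
  by rewrite inE; apply/eqP; apply: Sinj; rewrite !E.
pose h i := odflt (v ord0) [pick x in arc_set (b i) :\: U].
have Hh : forall i, i \in I -> h i \in ~: U /\ arc_set (b i) = h i |: U.
  move=> i; rewrite inE => sub.
  have : #|arc_set (b i) :\: U| = 1.
    rewrite cardsD cS (setIidPr sub) U3e //.
  move/eqP; case/cards1P => x Ex.
  rewrite /h Ex; case: pickP => [y|]; last by move/(_ x); rewrite inE eqxx.
  rewrite inE => /eqP -> /=; split.
    have : x \in arc_set (b i) :\: U by rewrite Ex inE.
    by rewrite !inE => /andP [].
  apply/setP => z; have : (z \in arc_set (b i) :\: U) = (z == x) by rewrite Ex inE.
  rewrite !inE => <-.
  have := subsetP sub z; rewrite !inE.
  by case: (z \in P); case: (z \in Q); case: (z \in b i) => //= ->.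
have hinj : {in I &, injective h}.
  move=> i j iI jI Eh; apply: Sinj.
  by rewrite (Hh _ iI).2 (Hh _ jI).2 Eh.
rewrite -(card_in_imset hinj).
apply: (@leq_trans #|~: U|); last by rewrite cardsCs setCK cV U3e.
apply: subset_leq_card; apply/subsetP => y /imsetP [i iI ->].
exact: (Hh _ iI).1.
Qed.
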